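(* Let $k\ge4$ be an integer, $\eta\in[\eta_{k+1},\eta_k)$, and $j\ge k$ an integer. Then $\angle 1z_jw_1\in(0,\pi)$.
   Context: For $\eta\in(0,\pi/3)$ let $a=\frac{e^{-i\eta}}{2\cos\eta}$, $c=\frac{1}{1-|a|^4}$, $z_j=ca^{j+1}$, $w_1=1-c|a|^2a$. For $u,v,w\in\mathbb{C}$, $\angle uvw=\arg\frac{w-v}{u-v}$ with $\arg$ taking values in $[0,2\pi)$. For integers $k\ge1$ let $\Phi_k(\eta)=(1-|a|^4)\sin((k-1)\eta)-|a|^3\sin((k-2)\eta)+|a|^k\sin\eta$; for each $k\ge4$, $\Phi_k$ has a unique zero in $(\pi/k,\pi/(k-1))$, denoted $\eta_k$. *)

(* Defs.v *)
From Stdlib Require Import Reals ClassicalEpsilon.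
From Coquelicot Require Import Coquelicot.
Open Scope R_scope.

Definition a_of (eta : R) : C :=
  ((/ (2 * cos eta))%R : C) * (cos eta, - sin eta)%R.

Definition c_of (eta : R) : R := / (1 - Cmod (a_of eta) ^ 4).

Definition z_of (eta : R) (j : nat) : C :=
  (RtoC (c_of eta) * Cpow (a_of eta) (S j))%C.

Definition w1_of (eta : R) : C :=
  (RtoC 1 - RtoC (c_of eta * Cmod (a_of eta) ^ 2) * a_of eta)%C.

Definition Carg (z : C) : R :=
  epsilon (inhabits 0)
    (fun t => 0 <= t < 2 * PI /\ z = (RtoC (Cmod z) * (cos t, sin t))%C).

Definition angle (u v w : C) : R := Carg ((w - v) / (u - v))%C.

Definition Phi (k : nat) (eta : R) : R :=
  let r := Cmod (a_of eta) in
  (1 - r ^ 4) * sin ((INR k - 1) * eta) - r ^ 3 * sin ((INR k - 2) * eta)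
  + r ^ k * sin eta.

(* Main.v *)
Require Import Defs.
From Stdlib Require Import Reals Lra Psatz ClassicalEpsilon.
From Coquelicot Require Import Coquelicot.
Open Scope R_scope.

Lemma Carg_pos (q : C) : 0 < snd q -> 0 < Carg q < PI.
Proof.
  intros Hq.
  set (m := Cmod q).
  assert (Hm : 0 < m).
  { unfold m, Cmod. apply sqrt_lt_R0. destruct q as [p1 p2]; simpl in *. nra. }
  assert (Hm2 : m * m = fst q ^ 2 + snd q ^ 2).
  { unfold m, Cmod. rewrite sqrt_sqrt; [ring|]. nra. }
  assert (Hb : -1 <= fst q / m <= 1).
  { split.
    - apply (Rmult_le_reg_r m); [lra|]. field_simplify; [|lra]. nra.
    - apply (Rmult_le_reg_r m); [lra|]. field_simplify; [|lra]. nra. }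
  assert (Hex : exists t, 0 <= t < 2 * PI /\ q = (RtoC (Cmod q) * (cos t, sin t))%C).
  { exists (acos (fst q / m)). split.
    - pose proof (acos_bound (fst q / m)). pose proof PI_RGT_0. lra.
    - rewrite cos_acos by exact Hb. rewrite sin_acos by exact Hb.
      fold m. destruct q as [p1 p2]. unfold Cmult, RtoC; simpl in *.
      assert (E : m * sqrt (1 - (p1 / m)²) = p2).
      { assert (E2 : 1 - (p1/m)² = (p2 / m) ^ 2).
        { replace (1 - (p1/m)²) with ((m*m - p1^2)/(m*m)) by (unfold Rsqr; field; lra).
          replace ((p2/m)^2) with (p2^2/(m*m)) by (field; lra).
          rewrite Hm2. field. nra. }
        rewrite E2, sqrt_pow2. field. lra. apply Rlt_le, Rdiv_lt_0_compat; lra. }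
      apply injective_projections; simpl; [field; lra | ]. rewrite E. ring. }
  pose proof (epsilon_spec (inhabits 0) (fun t => 0 <= t < 2 * PI /\ q = (RtoC (Cmod q) * (cos t, sin t))%C) Hex) as [Ht Heq].
  unfold Carg. set (t := epsilon _ _) in *.
  assert (Hs : 0 < sin t).
  { assert (E : snd q = Cmod q * sin t).
    { rewrite Heq at 1. unfold Cmult, RtoC; simpl. ring. }
    fold m in E. rewrite E in Hq. apply (Rmult_lt_reg_l m); lra. }
  split.
  - destruct (Req_dec t 0) as [E|E]; [rewrite E, sin_0 in Hs; lra | lra].
  - destruct (Rlt_le_dec t PI) as [H|H]; [exact H|].
    pose proof (sin_le_0 t H ltac:(lra)). lra.
Qed.

Lemma a_eq (e : R) : a_of e = (/(2*cos e) * cos e, - (/(2*cos e) * sin e)).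
Proof. unfold a_of, Cmult, RtoC; simpl. apply injective_projections; simpl; ring. Qed.

Lemma Cmod_a (e : R) : 0 < cos e -> Cmod (a_of e) = /(2*cos e).
Proof.
  intros H. rewrite a_eq. unfold Cmod; cbn [fst snd].
  replace ((/ (2 * cos e) * cos e) ^ 2 + (- (/ (2 * cos e) * sin e)) ^ 2)
    with ((/(2*cos e))^2 * (sin e ^ 2 + cos e ^2)) by ring.
  rewrite <- !Rsqr_pow2, sin2_cos2, Rmult_1_r, Rsqr_pow2.
  apply sqrt_pow2. apply Rlt_le, Rinv_0_lt_compat. lra.
Qed.

Lemma Cpow_a (r e : R) (n : nat) :
  Cpow (r * cos e, - (r * sin e)) n = (r ^ n * cos (INR n * e), - (r ^ n * sin (INR n * e))).
Proof.
  induction n as [|n IH].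
  - simpl. rewrite Rmult_0_l, cos_0, sin_0. apply injective_projections; simpl; ring.
  - simpl Cpow. rewrite IH. rewrite S_INR.
    replace ((INR n + 1) * e) with (INR n * e + e) by ring.
    rewrite cos_plus, sin_plus. unfold Cmult; simpl. apply injective_projections; simpl; ring.
Qed.

Lemma sin_rec (e : R) (n : nat) :
  sin (INR (S (S n)) * e) = 2 * cos e * sin (INR (S n) * e) - sin (INR n * e).
Proof.
  rewrite !S_INR.
  replace ((INR n + 1 + 1) * e) with ((INR n + 1) * e + e) by ring.
  replace (INR n * e) with ((INR n + 1) * e - e) by ring.
  rewrite sin_plus, sin_minus. ring.
Qed.

Lemma sin_bound (e : R) (n : nat) : 0 <= sin e -> Rabs (sin (INR n * e)) <= INR n * sin e.
Proof.
  intros H. induction n as [|n IH].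
  - simpl. rewrite Rmult_0_l, sin_0, Rabs_R0. lra.
  - rewrite S_INR. replace ((INR n + 1) * e) with (INR n * e + e) by ring.
    rewrite sin_plus.
    pose proof (COS_bound e). pose proof (COS_bound (INR n * e)).
    eapply Rle_trans; [apply Rabs_triang|]. rewrite !Rabs_mult.
    assert (Rabs (cos e) <= 1) by (apply Rabs_le; lra).
    assert (Rabs (cos (INR n * e)) <= 1) by (apply Rabs_le; lra).
    rewrite (Rabs_right (sin e)) by lra.
    pose proof (Rabs_pos (sin (INR n * e))).
    nra.
Qed.

Lemma pow_le1 (r : R) (n : nat) : 0 <= r <= 1 -> r ^ n <= 1.
Proof. intros H. rewrite <- (pow1 n). apply pow_incr. lra. Qed.

Lemma pw5 (r : R) (j : nat) : 0 < r < 5/6 -> (5 <= j)%nat -> INR j * r ^ (j+1) <= 5 * r ^ 6.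
Proof.
  intros Hr Hj. induction Hj as [|j Hj IH].
  - simpl. lra.
  - rewrite S_INR. replace (S j + 1)%nat with (S (j+1)) by lia. simpl pow.
    assert (HJ : 5 <= INR j) by (replace 5 with (INR 5) by (simpl; ring); apply le_INR; exact Hj).
    assert (0 <= r ^ (j+1)) by (apply pow_le; lra).
    assert ((INR j + 1) * r <= INR j) by nra.
    nra.
Qed.

Lemma key5 (r se S : R) (j : nat) : 0 < r -> r ^ 2 < 1/2 -> (5 <= j)%nat -> 0 < se ->
  Rabs S <= INR j * se -> 0 < (1 - r ^ 4) * se + r ^ (j+1) * S.
Proof.
  intros Hr Hr2 Hj Hse HS.
  assert (Hr56 : r < 5/6) by nra.
  pose proof (pw5 r j (conj Hr Hr56) Hj) as P.
  assert (P2 : 5 * r ^ 6 < 5/8).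
  { replace (r^6) with ((r^2)^3) by ring. assert (0 < r^2) by nra.
    assert (r^2*r^2 < 1/4) by nra. simpl. nra. }
  assert (Hp : 0 < r ^ (j+1)) by (apply pow_lt; lra).
  assert (HS' : - (INR j * se) <= S) by (pose proof (Rle_abs (-S)) as X; rewrite Rabs_Ropp in X; lra).
  assert (r ^ (j+1) * S >= - (r^(j+1) * (INR j * se))) by nra.
  assert (r^4 < 1/4) by (replace (r^4) with ((r^2)^2) by ring; nra).
  nra.
Qed.

Lemma key4 (e r : R) (j : nat) : 0 < r -> r ^ 4 < 1/2 -> cos e = / (2 * r) -> 1/2 < sin e ->
  (4 <= j)%nat -> 0 < (1 - r ^ 4) * sin e + r ^ (j+1) * sin (INR j * e).
Proof.
  intros Hr Hr4 Hc Hs Hj.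
  assert (Hr1 : r < 1) by (destruct (Rlt_le_dec r 1) as [X|X]; [exact X|]; assert (1 <= r^4) by (rewrite <- (pow1 4); apply pow_incr; lra); lra).
  assert (s1 : sin (INR 1 * e) = sin e) by (replace (INR 1 * e) with e by (simpl; ring); reflexivity).
  assert (s0 : sin (INR 0 * e) = 0) by (simpl; rewrite Rmult_0_l; apply sin_0).
  pose proof (sin_rec e 0) as s2. pose proof (sin_rec e 1) as s3.
  pose proof (sin_rec e 2) as s4. pose proof (sin_rec e 3) as s5.
  pose proof (sin_rec e 4) as s6.
  rewrite s0, s1 in s2. rewrite s1, s2 in s3. rewrite s2, s3 in s4.
  rewrite s3, s4 in s5. rewrite s4, s5 in s6.
  rewrite Hc in s2, s3, s4, s5, s6.
  set (t := r^2). assert (Ht : t * t < 1/2) by (unfold t; nra). assert (0 < t) by (unfold t; nra).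
  destruct (Nat.eq_dec j 4) as [->|N4]; [|destruct (Nat.eq_dec j 5) as [->|N5];
    [|destruct (Nat.eq_dec j 6) as [->|N6]]].
  - rewrite s4. replace (4+1)%nat with 5%nat by lia.
    match goal with |- 0 < ?X => replace X with (sin e * (1 + t - 3 * t * t)) by (unfold t; field; lra) end.
    apply Rmult_lt_0_compat; [lra|]. nra.
  - rewrite s5. replace (5+1)%nat with 6%nat by lia.
    match goal with |- 0 < ?X => replace X with (sin e * (1 + t - 4 * t * t + t * t * t)) by (unfold t; field; lra) end.
    apply Rmult_lt_0_compat; [lra|]. nra.
  - rewrite s6. replace (6+1)%nat with 7%nat by lia.
    match goal with |- 0 < ?X => replace X with (sin e * (1 + t - 5 * t * t + 3 * t * t * t)) by (unfold t; field; lra) end.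
    apply Rmult_lt_0_compat; [lra|]. nra.
  - assert (Hj7 : (7 <= j)%nat) by lia.
    replace (j+1)%nat with (8 + (j - 7))%nat by lia. rewrite pow_add.
    assert (H8 : r ^ 8 < 1/4) by (replace (r^8) with (t*t*t*t) by (unfold t; ring); nra).
    assert (Hq : 0 <= r ^ (j-7) <= 1) by (split; [apply pow_le; lra | apply pow_le1; lra]).
    assert (0 < r ^ 8) by (apply pow_lt; lra).
    pose proof (SIN_bound (INR j * e)).
    assert (r ^ 8 * r ^ (j - 7) * sin (INR j * e) >= - (r^8)).
    { assert (0 <= r ^ 8 * r ^ (j - 7) <= r^8) by nra. nra. }
    nra.
Qed.

Lemma div_im (P D : C) : 0 < snd P * fst D - fst P * snd D -> 0 < snd (P / D)%C.
Proof.
  destruct P as [p1 p2], D as [d1 d2]. unfold Cdiv, Cmult, Cinv; cbn [fst snd]. intros H.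
  assert (Hn : 0 < d1 ^ 2 + d2 ^ 2).
  { destruct (Req_dec d1 0) as [->|N]; [destruct (Req_dec d2 0) as [->|N2]; [nra|nra]|nra]. }
  replace (p1 * (- d2 / (d1 ^ 2 + d2 ^ 2)) + p2 * (d1 / (d1 ^ 2 + d2 ^ 2)))
    with ((p2 * d1 - p1 * d2) / (d1 ^ 2 + d2 ^ 2)) by (field; lra).
  apply Rdiv_lt_0_compat; lra.
Qed.

(* the geometric core: positivity of the cross product *)
Lemma core (e : R) (j : nat) : 0 < cos e -> 
  let r := / (2 * cos e) in
  r < 1 -> 0 < (1 - r ^ 4) * sin e + r ^ (j+1) * sin (INR j * e) ->
  0 < angle (RtoC 1) (z_of e j) (w1_of e) < PI.
Proof.
  intros Hc r Hr1 Hpos.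
  assert (Hr : 0 < r) by (unfold r; apply Rinv_0_lt_compat; lra).
  unfold angle, z_of, w1_of, c_of. rewrite Cmod_a by exact Hc. rewrite a_eq. fold r.
  rewrite Cpow_a.
  apply Carg_pos. apply div_im.
  set (c := / (1 - r ^ 4)).
  assert (Hr4 : r ^ 4 < 1) by (assert (r*r < 1) by nra; assert (r*r*(r*r) < 1) by nra; simpl; nra).
  unfold Cminus, Cplus, Copp, Cmult, RtoC; cbn [fst snd].
  assert (HS : sin (INR j * e) = sin (INR (S j) * e) * cos e - cos (INR (S j) * e) * sin e).
  { rewrite <- sin_minus. f_equal. rewrite S_INR. ring. }
  replace (j+1)%nat with (S j) in Hpos by lia.
  rewrite HS in Hpos.
  set (th := INR (S j) * e) in *.
  set (rj := r ^ S j) in *.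
  assert (Hc0 : 0 < c) by (unfold c; apply Rinv_0_lt_compat; lra).
  match goal with |- 0 < ?X =>
    replace X with (c * r ^ 3 * c * ((1 - r ^ 4) * sin e + rj * (sin th * cos e - cos th * sin e)))
  end.
  - apply Rmult_lt_0_compat; [|exact Hpos]. apply Rmult_lt_0_compat; [|exact Hc0].
    apply Rmult_lt_0_compat; [exact Hc0|]. apply pow_lt; exact Hr.
  - unfold c. field. lra.
Qed.

Theorem lemma5p2 (k : nat) (eta_k eta_k1 : R) (eta : R) (j : nat) :
  (4 <= k)%nat ->
  PI / INR k < eta_k < PI / (INR k - 1) -> Phi k eta_k = 0 ->
  PI / INR (k + 1) < eta_k1 < PI / INR k -> Phi (k + 1) eta_k1 = 0 ->
  eta_k1 <= eta < eta_k ->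
  (k <= j)%nat ->
  0 < angle (RtoC 1) (z_of eta j) (w1_of eta) < PI.
Proof.
  intros Hk [Hk1 Hk2] Phk [Hl1 Hl2] _ [He1 He2] Hj.
  pose proof PI_RGT_0 as HPI.
  assert (HK : 4 <= INR k) by (replace 4 with (INR 4) by (simpl; ring); apply le_INR; exact Hk).
  assert (HK1 : 0 < INR (k+1)) by (rewrite plus_INR; simpl; lra).
  assert (He0 : 0 < eta).
  { assert (0 < PI / INR (k+1)) by (apply Rdiv_lt_0_compat; lra). lra. }
  assert (Hup : PI / (INR k - 1) <= PI / 3).
  { unfold Rdiv. apply Rmult_le_compat_l; [lra|]. apply Rinv_le_contravar; lra. }
  assert (Hc : 0 < cos eta) by (apply cos_gt_0; lra).
  assert (Hsn : 0 < sin eta) by (apply sin_gt_0; lra).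
  set (r := / (2 * cos eta)).
  assert (Hr : 0 < r) by (unfold r; apply Rinv_0_lt_compat; lra).
  assert (Hcr : cos eta = / (2 * r)) by (unfold r; field; lra).
  destruct (Nat.eq_dec k 4) as [->|N4].
  -
    replace (INR 4 - 1) with 3 in Hk2 by (simpl; ring).
    replace (INR (4+1)) with 5 in Hl1 by (simpl; ring).
    assert (Hek : 0 < eta_k) by lra.
    assert (Hck : 1/2 < cos eta_k) by (rewrite <- cos_PI3; apply cos_decreasing_1; lra).
    assert (Hsk : 0 < sin eta_k) by (apply sin_gt_0; lra).
    assert (Hx4 : 16 * cos eta_k ^ 4 = 2).
    { unfold Phi in Phk. rewrite Cmod_a in Phk by lra.
      replace (INR 4 - 1) with (INR 3) in Phk by (simpl; ring).
      replace (INR 4 - 2) with (INR 2) in Phk by (simpl; ring).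
      assert (s1 : sin (INR 1 * eta_k) = sin eta_k) by (replace (INR 1 * eta_k) with eta_k by (simpl; ring); reflexivity).
      assert (s0 : sin (INR 0 * eta_k) = 0) by (simpl; rewrite Rmult_0_l; apply sin_0).
      pose proof (sin_rec eta_k 0) as s2. pose proof (sin_rec eta_k 1) as s3.
      rewrite s0, s1 in s2. rewrite s1, s2 in s3. rewrite s3, s2 in Phk.
      set (x := cos eta_k) in *.
      replace ((1 - (/ (2 * x)) ^ 4) * (2 * x * (2 * x * sin eta_k - 0) - sin eta_k) -
        (/ (2 * x)) ^ 3 * (2 * x * sin eta_k - 0) + (/ (2 * x)) ^ 4 * sin eta_k)
        with (sin eta_k * ((4 * x^2 - 1) * (16 * x^4 - 2)) / (16 * x ^ 4)) in Phk by (field; lra).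
      assert (Hx : 0 < 16 * x ^ 4) by (apply Rmult_lt_0_compat; [lra| apply pow_lt; lra]).
      apply (Rmult_eq_compat_r (16 * x ^ 4)) in Phk.
      replace (sin eta_k * ((4 * x ^ 2 - 1) * (16 * x ^ 4 - 2)) / (16 * x ^ 4) * (16 * x ^ 4))
        with (sin eta_k * (4 * x ^ 2 - 1) * (16 * x ^ 4 - 2)) in Phk by (field; lra).
      rewrite Rmult_0_l in Phk.
      apply Rmult_integral in Phk as [Z|Z]; [|lra].
      apply Rmult_integral in Z as [Z|Z]; [lra|nra]. }
    assert (Hcc : cos eta_k < cos eta) by (apply cos_decreasing_1; lra).
    assert (Hr4 : r ^ 4 < 1/2).
    { unfold r. rewrite pow_inv. replace (1/2) with (/ (16 * cos eta_k ^ 4)) by (rewrite Hx4; field).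
      assert (16 * cos eta_k ^ 4 < (2 * cos eta) ^ 4).
      { replace ((2 * cos eta)^4) with (16 * cos eta ^ 4) by ring.
        apply Rmult_lt_compat_l; [lra|].
        assert (cos eta_k * cos eta_k < cos eta * cos eta) by nra.
        assert (cos eta_k * cos eta_k * (cos eta_k * cos eta_k) < cos eta * cos eta * (cos eta * cos eta)) by nra.
        simpl; nra. }
      apply Rinv_lt_contravar; [|lra]. rewrite Hx4. apply Rmult_lt_0_compat; [lra|]. apply pow_lt; lra. }
    assert (Hs : 1/2 < sin eta).
    { rewrite <- sin_PI6. apply sin_increasing_1; lra. }
    assert (Hr1 : r < 1).
    { destruct (Rlt_le_dec r 1) as [X|X]; [exact X|].
      assert (1 <= r^4) by (rewrite <- (pow1 4); apply pow_incr; lra); lra. }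
    apply core; [exact Hc|exact Hr1|].
    apply key4; auto.
  -
    assert (HK5 : 5 <= INR k) by (replace 5 with (INR 5) by (simpl; ring); apply le_INR; lia).
    assert (Hup4 : PI / (INR k - 1) <= PI / 4).
    { unfold Rdiv. apply Rmult_le_compat_l; [lra|]. apply Rinv_le_contravar; lra. }
    assert (Hc4 : cos (PI/4) < cos eta) by (apply cos_decreasing_1; lra).
    rewrite cos_PI4 in Hc4.
    assert (Hs2 : sqrt 2 * sqrt 2 = 2) by (apply sqrt_sqrt; lra).
    assert (Hs2p : 0 < sqrt 2) by (apply sqrt_lt_R0; lra).
    assert (Hcos2 : 1/2 < cos eta ^ 2).
    { assert (1 < sqrt 2 * cos eta).
      { apply (Rmult_lt_compat_l (sqrt 2)) in Hc4; [|lra].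
        replace (sqrt 2 * (1 / sqrt 2)) with 1 in Hc4 by (field; lra). lra. }
      nra. }
    assert (Hr2 : r ^ 2 < 1/2).
    { rewrite Hcr in Hcos2. replace ((/ (2 * r))^2) with (/ (4 * r^2)) in Hcos2 by (field; lra).
      assert (0 < r^2) by nra.
      apply (Rmult_lt_compat_r (4 * r^2)) in Hcos2; [|lra].
      replace (/ (4 * r ^ 2) * (4 * r ^ 2)) with 1 in Hcos2 by (field; lra). lra. }
    assert (Hr1 : r < 1) by nra.
    apply core; [exact Hc|exact Hr1|].
    apply key5; auto; [lia|]. apply sin_bound. lra.
Qed.
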